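(* For all non-negative integers $k$ and $n$, every weak embedding $f$ of $L_2(k)$ into $L_2(n)$ is distance-preserving: for all $x,y\in L_2(k)$, the distance between $x$ and $y$ in the Hasse diagram of $L_2(k)$ equals the distance between $f(x)$ and $f(y)$ in the Hasse diagram of $L_2(n)$.
   Context: $B_m$ denotes the Boolean lattice of all subsets of $\{1,\dots,m\}$ ordered by inclusion; its $j$-th level is the family of $j$-element subsets. $L_2(m)$ denotes the subposet of $B_m$ induced by the union of its two middle levels, namely levels $\lfloor (m-1)/2\rfloor$ and $\lfloor (m+1)/2\rfloor$. An injective map $f$ from a poset $P$ to a poset $Q$ is a weak embedding if $p\le q$ implies $f(p)\le f(q)$. The Hasse diagram of a poset is the graph on its elements in which $p,q$ are adjacent iff one covers the other (they are comparable and no element lies strictly between them); distance means graph distance in the Hasse diagram. *)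

(* Defs.v *)
From mathcomp Require Import all_boot.
Set Implicit Arguments. Unset Strict Implicit. Unset Printing Implicit Defensive.

(* B_m = subsets of 'I_m (i.e. of {1..m}, reindexed to {0..m-1}).  For m = 0 the
   truncated nat value (0-1)./2 = 0 differs from floor(-1/2) = -1, but level
   -1 is empty and level 0 is already included, so the element set agrees. *)
Definition lowlev (m : nat) : nat := (m - 1)./2.
Definition highlev (m : nat) : nat := (m + 1)./2.

Definition inL2 (m : nat) (A : {set 'I_m}) : bool :=
  (#|A| == lowlev m) || (#|A| == highlev m).

Definition L2 (m : nat) := {A : {set 'I_m} | inL2 A}.

Definition L2le (m : nat) (x y : L2 m) : bool := val x \subset val y.
Definition L2lt (m : nat) (x y : L2 m) : bool := val x \proper val y.

Definition L2cover (m : nat) (x y : L2 m) : Prop :=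
  L2lt x y /\ ~ (exists z : L2 m, L2lt x z /\ L2lt z y).

Definition L2adj (m : nat) (x y : L2 m) : Prop := L2cover x y \/ L2cover y x.

Fixpoint L2walk (m : nat) (d : nat) (x y : L2 m) : Prop :=
  match d with
  | 0 => x = y
  | d'.+1 => exists z : L2 m, L2adj x z /\ L2walk d' z y
  end.

Definition L2dist_is (m : nat) (x y : L2 m) (d : nat) : Prop :=
  L2walk d x y /\ forall d', d' < d -> ~ L2walk d' x y.

Definition weak_embedding (k n : nat) (f : L2 k -> L2 n) : Prop :=
  injective f /\ forall x y : L2 k, L2le x y -> L2le (f x) (f y).

(* Main.v *)
Require Import Defs.
From mathcomp Require Import all_boot.
From mathcomp Require Import zify.
Set Implicit Arguments. Unset Strict Implicit. Unset Printing Implicit Defensive.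

Section SD.
Variable T : finType.
Implicit Types A B C X Z : {set T}.

Definition sd A B := (A :\: B) :|: (B :\: A).
Definition Dd A B := #|sd A B|.

Lemma DdC A B : Dd A B = Dd B A.
Proof. by rewrite /Dd /sd setUC. Qed.

Lemma Dd_tri A B C : Dd A C <= Dd A B + Dd B C.
Proof.
rewrite /Dd; apply: leq_trans (leq_card_setU _ _).
apply: subset_leq_card; apply/subsetP => i; rewrite !inE.
by case: (i \in A); case: (i \in B); case: (i \in C).
Qed.

Lemma Dd0 A B : Dd A B = 0 -> A = B.
Proof.
move/eqP; rewrite cards_eq0 => /eqP H; apply/setP => i.
have : i \in sd A B = (i \in set0) by rewrite H.
rewrite !inE.
by case: (i \in A); case: (i \in B).
Qed.

Lemma DdAA A : Dd A A = 0.
Proof. by rewrite /Dd /sd setDv setU0 cards0. Qed.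

Lemma DdE A B : Dd A B + 2 * #|A :&: B| = #|A| + #|B|.
Proof.
have dj : [disjoint A :\: B & B :\: A].
  rewrite -setI_eq0; apply/eqP/setP => i; rewrite !inE.
  by case: (i \in A); case: (i \in B).
have := leq_card_setU (A :\: B) (B :\: A); rewrite dj => -[_ /eqP E].
rewrite /Dd /sd E.
have := cardsID B A; have := cardsID A B; rewrite setIC; lia.
Qed.

Lemma Dd_add X Z a : a \notin Z ->
  (a \in X -> Dd X Z = (Dd X (a |: Z)).+1) /\
  (a \notin X -> Dd X (a |: Z) = (Dd X Z).+1).
Proof.
move=> aZ; split => aX.
- have E : sd X Z = a |: sd X (a |: Z).
    apply/setP => i; rewrite !inE; case: (eqVneq i a) => [->|] //=.
    by rewrite aX (negPf aZ).
  rewrite /Dd E cardsU1 !inE eqxx /= aX /=; lia.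
- have E : sd X (a |: Z) = a |: sd X Z.
    apply/setP => i; rewrite !inE; case: (eqVneq i a) => [->|] //=.
    by rewrite (negPf aX).
  rewrite /Dd E cardsU1 !inE (negPf aX) /=; lia.
Qed.
End SD.
Ltac slia := simpl in *; lia.
Section L2m.
Variable m : nat.
Implicit Types x y z w : L2 m.

Lemma lev_le : lowlev m <= highlev m <= (lowlev m).+1.
Proof. rewrite /lowlev /highlev; case: m => [|m'] //=. rewrite subn1 /= addn1 /=. by rewrite leqnSn leqnn. Qed.

Lemma lev_S : 0 < m -> highlev m = (lowlev m).+1.
Proof. rewrite /lowlev /highlev; case: m => [|m'] //= _. by rewrite subn1 /= addn1. Qed.

Lemma L2card x : #|val x| = lowlev m \/ #|val x| = highlev m.
Proof. by case: x => A /= /orP [] /eqP ->; [left|right]. Qed.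

Lemma cover_card x z : L2cover x z ->
  [/\ val x \subset val z, #|val z| = (#|val x|).+1, #|val x| = lowlev m & #|val z| = highlev m].
Proof.
case=> /= + _; rewrite /L2lt properEcard => /andP [sub lt].
have := lev_le; have := L2card x; have := L2card z => c1 c2 c3.
split => //; simpl in *; slia.
Qed.

Lemma adj_Dd x z : L2adj x z -> Dd (val x) (val z) = 1.
Proof.
have H : forall x z, L2cover x z -> Dd (val x) (val z) = 1.
  move=> x0 z0 /cover_card [sub E _ _]; have := DdE (val x0) (val z0).
  rewrite (setIidPl sub); slia.
by case => /H //; rewrite DdC.
Qed.

Lemma walk_ge d x y : L2walk d x y -> Dd (val x) (val y) <= d.
Proof.
elim: d x => [|d IH] x /=; first by move=> ->; rewrite DdAA.
case=> z [/adj_Dd a /IH b]; have := Dd_tri (val x) (val z) (val y). slia.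
Qed.

Lemma card_cover z x : val z \subset val x -> #|val x| = (#|val z|).+1 -> L2cover z x.
Proof.
move=> sub E; split; first by rewrite /L2lt properEcard sub E leqnn.
case=> w [] /proper_card a /proper_card b; slia.
Qed.

Lemma step x y n : 0 < m -> Dd (val x) (val y) = n.+1 ->
  exists z, (L2cover z y \/ L2cover y z) /\ Dd (val x) (val z) = n.
Proof.
move=> m0 D; have HL := lev_S m0.
case: (L2card y) => Ey.
- case: (eqVneq (val x :\: val y) set0) => [E0|/set0Pn [a]]; last first.
  + rewrite inE => /andP [ay ax].
    have P : inL2 (a |: val y) by rewrite /inL2 cardsU1 ay Ey HL eqxx orbT.
    exists (exist (fun A => inL2 A) _ P); split.
      by right; apply: card_cover; rewrite /= ?subsetUr // cardsU1 ay.
    have [H1 _] := Dd_add (val x) ay; rewrite (H1 ax) in D; by case: D.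
  + move/eqP: E0; rewrite setD_eq0 => sub; exfalso.
    have : val x == val y by rewrite eqEcard sub Ey; case: (L2card x) => ->; slia.
    by move/eqP => E; move: D; rewrite E DdAA.
- case: (eqVneq (val y :\: val x) set0) => [E0|/set0Pn [a]]; last first.
  + rewrite inE => /andP [ax ay].
    have P : inL2 (val y :\ a).
      have c := cardsD1 a (val y); rewrite ay Ey HL add1n in c.
      by case: c => c; rewrite /inL2 -c eqxx.
    exists (exist (fun A => inL2 A) _ P); split.
      left; apply: card_cover; rewrite /= ?subD1set // (cardsD1 a (val y)) ay //.
    have yE : val y = a |: (val y :\ a) by rewrite setD1K.
    have an : a \notin val y :\ a by rewrite !inE eqxx.
    have [_ H1] := Dd_add (val x) an; rewrite yE (H1 ax) in D; by case: D.
  + move/eqP: E0; rewrite setD_eq0 => sub; exfalso.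
    have : val y == val x by rewrite eqEcard sub Ey; case: (L2card x) => ->; have := lev_le; slia.
    by move/eqP => E; move: D; rewrite E DdAA.
Qed.

Lemma L2_0 x y : m = 0 -> x = y.
Proof.
move=> m0; apply: val_inj; apply/setP => i; exfalso; move: i; rewrite m0; by case.
Qed.

Lemma walk_ex x y : L2walk (Dd (val x) (val y)) x y.
Proof.
case: (posnP m) => [m0|mpos]; first by rewrite (L2_0 x y m0) DdAA.
move E: (Dd (val x) (val y)) => n; elim: n x E => [|n IH] x E /=.
  by apply: val_inj; apply: Dd0.
rewrite DdC in E; have [z [c D]] := step mpos E.
exists z; split; first by rewrite /L2adj; case: c; auto.
by apply: IH; rewrite DdC.
Qed.

Lemma distE x y d : L2dist_is x y d <-> d = Dd (val x) (val y).
Proof.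
split.
- case=> W N; have h1 := walk_ge W.
  case: (ltnP (Dd (val x) (val y)) d) => h2.
    by exfalso; apply: (N _ h2); apply: walk_ex.
  slia.
- move=> ->; split; first exact: walk_ex.
  by move=> d' lt /walk_ge; slia.
Qed.
End L2m.
Section Count.
Variable m : nat.
Implicit Types x y z w : L2 m.

Lemma proper_cover x y : val x \proper val y -> L2cover x y.
Proof.
move=> pr; split => // -[w [/proper_card a /proper_card b]].
have := lev_le m; have := L2card x; have := L2card y; have := L2card w.
have := proper_card pr; slia.
Qed.

Lemma cntUp z (X : {set 'I_m}) : #|val z| = lowlev m -> highlev m = (lowlev m).+1 ->
  #|[set w : L2 m | (val z \proper val w) && (Dd X (val w) == (Dd X (val z)).-1)]|
  = #|X :\: val z|.
Proof.
move=> Ez HL.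
pose up a := insubd z (a |: val z).
have inl a : a \notin val z -> inL2 (a |: val z).
  by move=> az; rewrite /inL2 cardsU1 az Ez HL eqxx orbT.
have upE a : a \notin val z -> val (up a) = a |: val z.
  by move=> az; rewrite /up insubdK //; apply: inl.
have -> : [set w : L2 m | (val z \proper val w) && (Dd X (val w) == (Dd X (val z)).-1)]
   = [set up a | a in X :\: val z].
  apply/setP => w; rewrite inE; apply/andP/imsetP.
  - case=> pr /eqP D.
    have cw := proper_card pr.
    have Ew : #|val w| = (lowlev m).+1.
      by case: (L2card w); slia.
    case: (eqVneq (val w :\: val z) set0) => [E0|/set0Pn [a]].
      by move/eqP: E0; rewrite setD_eq0 => sub; move: pr; rewrite properE sub andbF.
    rewrite inE => /andP [az aw].
    have wE : val w = a |: val z.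
      apply/esym/eqP; rewrite eqEcard cardsU1 az Ew Ez leqnn andbT.
      by rewrite subUset sub1set aw (proper_sub pr).
    have aX : a \in X.
      apply/negPn/negP => aX; have [_ H] := Dd_add X az; rewrite -wE in H.
      by move: D; rewrite (H aX); slia.
    exists a; first by rewrite inE aX az.
    by apply: val_inj; rewrite upE.
  - case=> a; rewrite inE => /andP [az aX] ->; rewrite upE //.
    split; first by rewrite properEcard subsetUr cardsU1 az add1n ltnSn.
    by have [H _] := Dd_add X az; rewrite (H aX).
apply: card_in_imset => a b; rewrite !inE => /andP [az _] /andP [bz _] E.
have := congr1 val E; rewrite !upE // => E2.
have : a \in b |: val z by rewrite -E2 setU11.
by rewrite in_setU1 (negPf az) orbF => /eqP.
Qed.

Lemma cntDown z (X : {set 'I_m}) : #|val z| = highlev m -> highlev m = (lowlev m).+1 ->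
  #|[set w : L2 m | (val w \proper val z) && (Dd X (val w) == (Dd X (val z)).-1)]|
  = #|val z :\: X|.
Proof.
move=> Ez HL.
pose dn a := insubd z (val z :\ a).
have inl a : a \in val z -> inL2 (val z :\ a).
  move=> az; have c := cardsD1 a (val z); rewrite az Ez HL add1n in c.
  by case: c => c; rewrite /inL2 -c eqxx.
have dnE a : a \in val z -> val (dn a) = val z :\ a.
  by move=> az; rewrite /dn insubdK //; apply: inl.
have -> : [set w : L2 m | (val w \proper val z) && (Dd X (val w) == (Dd X (val z)).-1)]
   = [set dn a | a in val z :\: X].
  apply/setP => w; rewrite inE; apply/andP/imsetP.
  - case=> pr /eqP D.
    have cw := proper_card pr.
    have Ew : #|val w| = lowlev m.
      by case: (L2card w); slia.
    case: (eqVneq (val z :\: val w) set0) => [E0|/set0Pn [a]].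
      by move/eqP: E0; rewrite setD_eq0 => sub; move: pr; rewrite properE sub andbF.
    rewrite inE => /andP [aw az].
    have c := cardsD1 a (val z); rewrite az Ez HL add1n in c; case: c => c.
    have wE : val w = val z :\ a.
      apply/eqP; rewrite eqEcard -c Ew leqnn andbT.
      apply/subsetP => i iw; rewrite !inE (subsetP (proper_sub pr) _ iw) andbT.
      by apply/eqP => ia; move: aw; rewrite -ia iw.
    have an : a \notin val z :\ a by rewrite !inE eqxx.
    have zE : val z = a |: (val z :\ a) by rewrite setD1K.
    have aX : a \notin X.
      apply/negP => aX; have [H _] := Dd_add X an; rewrite -zE -wE in H.
      by move: D; rewrite (H aX); slia.
    exists a; first by rewrite inE aX az.
    by apply: val_inj; rewrite dnE.
  - case=> a; rewrite inE => /andP [aX az] ->; rewrite dnE //.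
    split; first exact: properD1.
    have an : a \notin val z :\ a by rewrite !inE eqxx.
    have zE : val z = a |: (val z :\ a) by rewrite setD1K.
    by have [_ H] := Dd_add X an; rewrite {2}zE (H aX).
apply: card_in_imset => a b; rewrite !inE => /andP [_ az] /andP [_ bz] E.
have := congr1 val E; rewrite !dnE // => E2.
apply/eqP; apply/negP => /negP ab.
have : b \in val z :\ a by rewrite !inE eq_sym ab bz.
by rewrite E2 !inE eqxx.
Qed.
End Count.
Lemma lowlev_lt m : 0 < m -> lowlev m < m.
Proof. rewrite /lowlev; case: m => [|k'] //= _; rewrite subn1 /=. have := odd_double_half k'; rewrite -addnn; lia. Qed.

Section Main.
Variables (k n : nat) (f : L2 k -> L2 n).
Hypothesis finj : injective f.
Hypothesis fmono : forall x y : L2 k, L2le x y -> L2le (f x) (f y).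

Lemma fproper (x y : L2 k) : val x \proper val y -> val (f x) \proper val (f y).
Proof.
rewrite !properEneq => /andP [ne sub]; move: (fmono sub); rewrite /L2le => ->; rewrite andbT.
apply/negP => /eqP /val_inj /finj E; by rewrite E eqxx in ne.
Qed.

Lemma fcover (x y : L2 k) : L2cover x y -> L2cover (f x) (f y).
Proof. by case=> pr _; apply: proper_cover; apply: fproper. Qed.

Hypothesis kpos : 0 < k.

Lemma exists_cover (x : L2 k) : exists w, L2cover x w \/ L2cover w x.
Proof.
have HL := lev_S kpos.
case: (L2card x) => Ex.
- have : ~: val x != set0.
    rewrite -cards_eq0; have := cardsC (val x); rewrite card_ord Ex.
    have := lowlev_lt kpos; slia.
  case/set0Pn => a; rewrite inE => ax.
  have P : inL2 (a |: val x) by rewrite /inL2 cardsU1 ax Ex HL eqxx orbT.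
  exists (exist (fun A => inL2 A) _ P); left.
  by apply: card_cover; rewrite /= ?subsetUr // cardsU1 ax.
- have : val x != set0.
    by rewrite -cards_eq0 Ex HL.
  case/set0Pn => a ax.
  have P : inL2 (val x :\ a).
    have c := cardsD1 a (val x); rewrite ax Ex HL add1n in c.
    by case: c => c; rewrite /inL2 -c eqxx.
  exists (exist (fun A => inL2 A) _ P); right.
  by apply: card_cover; rewrite /= ?subD1set // (cardsD1 a (val x)) ax.
Qed.


Lemma sizef (x : L2 k) : #|val (f x)| + lowlev k = #|val x| + lowlev n /\ highlev n = (lowlev n).+1.
Proof.
have HL := lev_S kpos.
have := lev_le n.
have [w [c|c]] := exists_cover x.
- case: (cover_card c) => ? ? ? ?; case: (cover_card (fcover c)) => ? ? ? ?; slia.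
- case: (cover_card c) => ? ? ? ?; case: (cover_card (fcover c)) => ? ? ? ?; slia.
Qed.
Lemma main_eq d : forall x y : L2 k, Dd (val x) (val y) = d -> Dd (val (f x)) (val (f y)) = d.
Proof.
elim/ltn_ind: d => d IH x y D.
case: d IH D => [|d] IH D.
  have -> : x = y by apply: val_inj; apply: Dd0.
  by rewrite DdAA.
have [z [c Dz]] := step kpos D.
have Fz := IH d (ltnSn d) x z Dz.
have [sx HLn] := sizef x; have [sz _] := sizef z; have [sy _] := sizef y.
have HLk := lev_S kpos.
have ix := DdE (val x) (val z); have ifx := DdE (val (f x)) (val (f z)).
have c1 := cardsID (val z) (val x); have c2 := cardsID (val (f z)) (val (f x)).
have c3 := cardsID (val x) (val z); have c4 := cardsID (val (f x)) (val (f z)).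
have ix2 := DdE (val z) (val x); have ifx2 := DdE (val (f z)) (val (f x)).
rewrite DdC in ix2; rewrite DdC in ifx2.
(* generic: Dd fx fy differs from Dd fx fz by exactly 1 *)
have adj1 : Dd (val (f z)) (val (f y)) = 1.
  by apply: adj_Dd; case: c => c; [left|right]; apply: fcover.
have t1 := Dd_tri (val (f x)) (val (f z)) (val (f y)).
have t2 := Dd_tri (val (f x)) (val (f y)) (val (f z)).
rewrite (DdC (val (f y)) (val (f z))) in t2.
have e1 := DdE (val (f x)) (val (f y)).
have e2 := DdE (val (f z)) (val (f y)).
have ci := cardsID (val (f y)) (val (f x)).
have cj := cardsID (val (f z)) (val (f x)).
have ck := cardsID (val (f x)) (val (f y)).
case: (eqVneq (Dd (val (f x)) (val (f y))) d.+1) => // ne.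
have low : Dd (val (f x)) (val (f y)) = d.-1.
  (* parity *)
  case: c => c.
  - case: (cover_card (fcover c)) => sub E _ _.
    have := DdE (val (f z)) (val (f y)); rewrite (setIidPl sub).
    move: ne; slia.
  - case: (cover_card (fcover c)) => sub E _ _.
    have := DdE (val (f y)) (val (f z)); rewrite (setIidPl sub) DdC.
    move: ne; slia.
exfalso.
case: c => c.
- pose T := [set w : L2 k | (val z \proper val w) && (Dd (val x) (val w) == (Dd (val x) (val z)).-1)].
  pose T' := [set w : L2 n | (val (f z) \proper val w) && (Dd (val (f x)) (val w) == (Dd (val (f x)) (val (f z))).-1)].
  case: (cover_card c) => _ _ Lz _.
  case: (cover_card (fcover c)) => _ _ Lfz _.
  have sub : f @: T \subset T'.
    apply/subsetP => w' /imsetP [w]; rewrite inE => /andP [pr /eqP Dw] ->.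
    rewrite inE fproper //= Fz.
    rewrite (IH _ _ x w Dw) ?Dz //; slia.
  have cT : #|T| = #|T'|.
    rewrite /T /T' cntUp // cntUp //; slia.
  have ET : f @: T = T'.
    by apply/eqP; rewrite eqEcard sub card_imset // cT leqnn.
  have pr : val (f z) \proper val (f y) := proj1 (fcover c).
  have : f y \in T' by rewrite /T' inE pr Fz low eqxx.
  rewrite -ET mem_imset // /T inE => /andP [_ /eqP]; rewrite D Dz; slia.
- pose T := [set w : L2 k | (val w \proper val z) && (Dd (val x) (val w) == (Dd (val x) (val z)).-1)].
  pose T' := [set w : L2 n | (val w \proper val (f z)) && (Dd (val (f x)) (val w) == (Dd (val (f x)) (val (f z))).-1)].
  case: (cover_card c) => _ _ _ Hz.
  case: (cover_card (fcover c)) => _ _ _ Hfz.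
  have sub : f @: T \subset T'.
    apply/subsetP => w' /imsetP [w]; rewrite inE => /andP [pr /eqP Dw] ->.
    rewrite inE fproper //= Fz.
    rewrite (IH _ _ x w Dw) ?Dz //; slia.
  have cT : #|T| = #|T'|.
    rewrite /T /T' cntDown // cntDown //; slia.
  have ET : f @: T = T'.
    by apply/eqP; rewrite eqEcard sub card_imset // cT leqnn.
  have pr : val (f y) \proper val (f z) := proj1 (fcover c).
  have : f y \in T' by rewrite /T' inE pr Fz low eqxx.
  rewrite -ET mem_imset // /T inE => /andP [_ /eqP]; rewrite D Dz; slia.
Qed.
End Main.

Unset Implicit Arguments.
Theorem mainTheorem8 (k n : nat) (f : L2 k -> L2 n) :
  weak_embedding f ->
  forall (x y : L2 k) (d : nat), L2dist_is x y d <-> L2dist_is (f x) (f y) d.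
Proof.
case=> inj mono x y d.
have E : Dd (val (f x)) (val (f y)) = Dd (val x) (val y).
  case: (posnP k) => [k0|kpos].
    by rewrite (L2_0 x y k0) !DdAA.
  exact: main_eq.
by rewrite !distE E.
Qed.
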